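(* Let $Z$ be a hyperimmune set. Then there is a $1$-generic set $G\leq_T Z\oplus 0'$ such that $Z\subseteq G$.
   Context: An infinite set $Z$ is hyperimmune if for every computable increasing function $f$ there is an $n$ such that $[f(n),f(n+1))\cap Z=\emptyset$. A set $G$ (identified with its characteristic sequence in $2^\omega$) is $1$-generic if for every c.e. set $S$ of finite binary strings, either some initial segment of $G$ lies in $S$, or some initial segment of $G$ has no extension in $S$. *)

(* Defs.v *)
(* A self-contained model of (oracle) computability:
   unary mu-recursive functions over nat with Cantor pairing and an
   oracle-query primitive.  Sets of naturals are predicates nat -> Prop. *)
From Stdlib Require Import Arith List.
Import ListNotations.

Definition cpair (x y : nat) : nat := (x + y) * (x + y + 1) / 2 + y.

Inductive code : Type :=
| cZero : code
| cSucc : code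
| cPi1 : code
| cPi2 : code
| cOracle : code
| cComp : code -> code -> code
| cPair : code -> code -> code
| cRec : code -> code -> code  (* h<x,0> = f x ; h<x,n+1> = g<x,<n,h<x,n>>> *)
| cMin : code -> code.

Inductive eval (A : nat -> Prop) : code -> nat -> nat -> Prop :=
| e_zero x : eval A cZero x 0
| e_succ x : eval A cSucc x (S x)
| e_pi1 x y : eval A cPi1 (cpair x y) x
| e_pi2 x y : eval A cPi2 (cpair x y) y
| e_orc1 x : A x -> eval A cOracle x 1
| e_orc0 x : ~ A x -> eval A cOracle x 0
| e_comp f g x y z : eval A g x y -> eval A f y z -> eval A (cComp f g) x z
| e_pair f g x y z : eval A f x y -> eval A g x z -> eval A (cPair f g) x (cpair y z)
| e_rec0 f g x y : eval A f x y -> eval A (cRec f g) (cpair x 0) y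
| e_recS f g x n y z :
    eval A (cRec f g) (cpair x n) y ->
    eval A g (cpair x (cpair n y)) z ->
    eval A (cRec f g) (cpair x (S n)) z
| e_min f x y :
    eval A f (cpair x y) 0 ->
    (forall k, k < y -> exists v, v <> 0 /\ eval A f (cpair x k) v) ->
    eval A (cMin f) x y.

(** The empty oracle (unrelativized computation). *)
Definition empty_set : nat -> Prop := fun _ => False.

Fixpoint code_num (c : code) : nat :=
  match c with
  | cZero => cpair 0 0
  | cSucc => cpair 1 0
  | cPi1 => cpair 2 0
  | cPi2 => cpair 3 0
  | cOracle => cpair 4 0
  | cComp f g => cpair 5 (cpair (code_num f) (code_num g))
  | cPair f g => cpair 6 (cpair (code_num f) (code_num g))
  | cRec f g => cpair 7 (cpair (code_num f) (code_num g))
  | cMin f => cpair 8 (code_num f)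
  end.

Definition jump0 : nat -> Prop :=
  fun e => exists c, code_num c = e /\ exists v, eval empty_set c e v.

Definition join (A B : nat -> Prop) : nat -> Prop :=
  fun n => (exists k, n = 2 * k /\ A k) \/ (exists k, n = 2 * k + 1 /\ B k).

Definition turing_le (X A : nat -> Prop) : Prop :=
  exists c, forall n, (X n -> eval A c n 1) /\ (~ X n -> eval A c n 0).

Definition computable_fun (f : nat -> nat) : Prop :=
  exists c, forall n, eval empty_set c n (f n).

Definition increasing (f : nat -> nat) : Prop := forall n, f n < f (S n).

Definition infinite_set (Z : nat -> Prop) : Prop :=
  forall m, exists n, m <= n /\ Z n.

Definition hyperimmune (Z : nat -> Prop) : Prop :=
  infinite_set Z /\
  forall f, computable_fun f -> increasing f ->
    exists n, forall m, f n <= m -> m < f (S n) -> ~ Z m.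

Fixpoint str_num (s : list bool) : nat :=
  match s with
  | [] => 0
  | b :: t => 2 * str_num t + (if b then 2 else 1)
  end.

Definition ce_strings (S : list bool -> Prop) : Prop :=
  exists c, forall s, S s <-> exists v, eval empty_set c (str_num s) v.

Definition init_seg (G : nat -> Prop) (s : list bool) : Prop :=
  forall i, i < length s -> (nth i s false = true <-> G i).

Definition extends (t s : list bool) : Prop := exists r, t = s ++ r.

Definition one_generic (G : nat -> Prop) : Prop :=
  forall S, ce_strings S ->
    (exists s, init_seg G s /\ S s) \/
    (exists s, init_seg G s /\ forall t, S t -> ~ extends t s).

(* Main.v *)
Require Import Defs.
From Stdlib Require Import Arith Lia List Classical ClassicalEpsilon.
Import ListNotations.

Definition T (s : nat) := s * (s + 1) / 2.

Lemma T_succ s : T (S s) = T s + S s.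
Proof.
  unfold T. replace (S s * (S s + 1)) with (s * (s+1) + (S s) * 2) by nia.
  rewrite Nat.div_add by lia. reflexivity.
Qed.

Lemma cpair_T x y : cpair x y = T (x + y) + y.
Proof. reflexivity. Qed.

Lemma T_mono a b : a <= b -> T a <= T b.
Proof. induction 1; auto. rewrite T_succ. lia. Qed.

Lemma cpair_inj x y x' y' : cpair x y = cpair x' y' -> x = x' /\ y = y'.
Proof.
  rewrite !cpair_T. intros H.
  assert (x + y = x' + y').
  { destruct (lt_eq_lt_dec (x+y) (x'+y')) as [[h|h]|h]; auto.
    - pose proof (T_mono (S (x+y)) (x'+y') h). rewrite T_succ in H0. lia.
    - pose proof (T_mono (S (x'+y')) (x+y) h). rewrite T_succ in H0. lia. }
  rewrite H0 in H. lia.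
Qed.

Fixpoint unpair (n : nat) : nat * nat :=
  match n with
  | 0 => (0, 0)
  | S n => let (x, y) := unpair n in
           match x with 0 => (S y, 0) | S x' => (x', S y) end
  end.

Lemma unpair_spec n : cpair (fst (unpair n)) (snd (unpair n)) = n.
Proof.
  induction n; [reflexivity|].
  simpl. destruct (unpair n) as [x y]. simpl in *.
  destruct x; simpl; rewrite cpair_T in *.
  - rewrite !Nat.add_0_r. simpl plus in IHn. rewrite T_succ. lia.
  - rewrite <- IHn. replace (x + S y) with (S x + y) by lia. lia.
Qed.

Definition p1 n := fst (unpair n).
Definition p2 n := snd (unpair n).

Lemma cpair_p n : cpair (p1 n) (p2 n) = n.
Proof. apply unpair_spec. Qed.

Lemma p1c x y : p1 (cpair x y) = x.
Proof. pose proof (cpair_p (cpair x y)). apply cpair_inj in H. tauto. Qed.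
Lemma p2c x y : p2 (cpair x y) = y.
Proof. pose proof (cpair_p (cpair x y)). apply cpair_inj in H. tauto. Qed.

Lemma cpair_ge1 x y : x <= cpair x y.
Proof. rewrite cpair_T. assert (x+y <= T (x+y)). { induction (x+y); auto. rewrite T_succ. lia. } lia. Qed.
Lemma cpair_ge2 x y : y <= cpair x y.
Proof. rewrite cpair_T. lia. Qed.

Global Opaque cpair.

Lemma eval_ind2 (A : nat -> Prop) (P : code -> nat -> nat -> Prop)
  (Q0 : forall x, P cZero x 0)
  (Q1 : forall x, P cSucc x (S x))
  (Q2 : forall x y, P cPi1 (cpair x y) x)
  (Q3 : forall x y, P cPi2 (cpair x y) y)
  (Q4 : forall x, A x -> P cOracle x 1)
  (Q5 : forall x, ~ A x -> P cOracle x 0)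
  (Q6 : forall f g x y z, eval A g x y -> P g x y -> eval A f y z -> P f y z -> P (cComp f g) x z)
  (Q7 : forall f g x y z, eval A f x y -> P f x y -> eval A g x z -> P g x z -> P (cPair f g) x (cpair y z))
  (Q8 : forall f g x y, eval A f x y -> P f x y -> P (cRec f g) (cpair x 0) y)
  (Q9 : forall f g x n y z, eval A (cRec f g) (cpair x n) y -> P (cRec f g) (cpair x n) y ->
         eval A g (cpair x (cpair n y)) z -> P g (cpair x (cpair n y)) z -> P (cRec f g) (cpair x (S n)) z)
  (Q10 : forall f x y, eval A f (cpair x y) 0 -> P f (cpair x y) 0 ->
     (forall k, k < y -> exists v, v <> 0 /\ eval A f (cpair x k) v /\ P f (cpair x k) v) ->
     P (cMin f) x y) :
  forall c x v, eval A c x v -> P c x v.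
Proof.
  fix IH 4. intros c x v H. destruct H as [ | | | | x a | x a | f g x y z e1 e2 | f g x y z e1 e2
    | f g x y e1 | f g x n y z e1 e2 | f x y e1 hk].
  - apply Q0.
  - apply Q1.
  - apply Q2.
  - apply Q3.
  - apply Q4; auto.
  - apply Q5; auto.
  - eapply Q6; eauto.
  - eapply Q7; eauto.
  - eapply Q8; eauto.
  - eapply Q9; eauto.
  - eapply Q10; eauto. intros k h. destruct (hk k h) as [v [hv he]].
    exists v. split; [auto|split; auto].
Qed.

Ltac cpinj := repeat match goal with h : cpair _ _ = cpair _ _ |- _ =>
  apply cpair_inj in h; destruct h as [? ?]; subst end.

Ltac useih := repeat match goal with i : (forall w, eval ?A ?c ?x w -> ?v = w), h : eval ?A ?c ?x ?w' |- _ =>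
  apply i in h; subst end.

Lemma eval_det A c x v : eval A c x v -> forall w, eval A c x w -> v = w.
Proof.
  revert c x v. apply (eval_ind2 A (fun c x v => forall w, eval A c x w -> v = w)).
  - intros x w h; inversion h; auto.
  - intros x w h; inversion h; auto.
  - intros x y w h; inversion h; cpinj; auto.
  - intros x y w h; inversion h; cpinj; auto.
  - intros x a w h; inversion h; subst; tauto.
  - intros x a w h; inversion h; subst; tauto.
  - intros f g x y z e1 i1 e2 i2 w h; inversion h; subst.
    useih. auto.
  - intros f g x y z e1 i1 e2 i2 w h; inversion h; subst.
    useih. auto.
  - intros f g x y e1 i1 w h; inversion h; subst; cpinj; auto; discriminate.
  - intros f g x n y z e1 i1 e2 i2 w h; inversion h; subst; cpinj; try discriminate.
    match goal with h : S _ = S _ |- _ => injection h as -> end. useih. auto.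
  - intros f x y e1 i1 hk w h. inversion h as [| | | | | | | | | |f' x' y' e1' hk']; subst.
    destruct (lt_eq_lt_dec y w) as [[l|l]|l]; auto.
    + destruct (hk' y l) as [v [hv he]]. apply i1 in he. lia.
    + destruct (hk w l) as [v [hv [he hp]]]. apply hp in e1'. lia.
Qed.

Lemma ev_eq A c x v w : eval A c x v -> v = w -> eval A c x w.
Proof. intros; subst; auto. Qed.

Lemma ev_pi1 A x : eval A cPi1 x (p1 x).
Proof. rewrite <- (cpair_p x) at 1. constructor. Qed.
Lemma ev_pi2 A x : eval A cPi2 x (p2 x).
Proof. rewrite <- (cpair_p x) at 1. constructor. Qed.

Definition recv (F : nat -> nat) (G : nat -> nat) (x n : nat) : nat :=
  nat_rect (fun _ => nat) (F x) (fun i r => G (cpair x (cpair i r))) n.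

Lemma rec_ev0 A f g F G : (forall x, eval A f x (F x)) -> (forall z, eval A g z (G z)) ->
  forall x n, eval A (cRec f g) (cpair x n) (recv F G x n).
Proof.
  intros hf hg x n. induction n; simpl.
  - constructor. apply hf.
  - econstructor. apply IHn. apply hg.
Qed.

Lemma rec_ev A f g F G : (forall x, eval A f x (F x)) -> (forall z, eval A g z (G z)) ->
  forall z, eval A (cRec f g) z (recv F G (p1 z) (p2 z)).
Proof. intros. rewrite <- (cpair_p z) at 1. apply rec_ev0; auto. Qed.

Ltac ev_base := first
  [ apply ev_pi1 | apply ev_pi2 | apply e_zero | apply e_succ ].

Definition cID := cPair cPi1 cPi2.
Lemma cID_ev A x : eval A cID x x.
Proof. eapply ev_eq. apply e_pair; [apply ev_pi1|apply ev_pi2]. apply cpair_p. Qed.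

Fixpoint ck (n : nat) : code := match n with 0 => cZero | S n => cComp cSucc (ck n) end.
Lemma ck_ev A n x : eval A (ck n) x n.
Proof. induction n; simpl. constructor. econstructor; eauto. constructor. Qed.

Ltac psimp := repeat (rewrite ?p1c, ?p2c in * ).
Ltac rsimp := unfold recv in *; cbn [nat_rect] in *; psimp.

Definition ADD := cRec cID (cComp cSucc (cComp cPi2 cPi2)).
Lemma ADD_ev A z : eval A ADD z (p1 z + p2 z).
Proof.
  eapply ev_eq. apply rec_ev with (F := fun x => x) (G := fun w => S (p2 (p2 w))).
  - apply cID_ev.
  - intro. econstructor. econstructor; apply ev_pi2. constructor.
  - generalize (p1 z) (p2 z). intros x n. induction n; rsimp; lia.
Qed.

Definition MUL := cRec cZero (cComp ADD (cPair (cComp cPi2 cPi2) cPi1)).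
Lemma MUL_ev A z : eval A MUL z (p1 z * p2 z).
Proof.
  eapply ev_eq. apply rec_ev with (F := fun x => 0) (G := fun w => p2 (p2 w) + p1 w).
  - constructor.
  - intro. econstructor. econstructor. econstructor; apply ev_pi2. apply ev_pi1.
    eapply ev_eq. apply ADD_ev. psimp; auto.
  - generalize (p1 z) (p2 z). intros x n. induction n; rsimp; lia.
Qed.

Definition PRED := cComp (cRec cZero (cComp cPi1 cPi2)) (cPair cZero cID).
Lemma PRED_ev A z : eval A PRED z (pred z).
Proof.
  econstructor. econstructor. constructor. apply cID_ev.
  eapply ev_eq. apply rec_ev0 with (F := fun x => 0) (G := fun w => p1 (p2 w)).
  constructor. intro; econstructor; [apply ev_pi2|apply ev_pi1].
  destruct z; rsimp; auto.
Qed.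

Definition SUB := cRec cID (cComp PRED (cComp cPi2 cPi2)).
Lemma SUB_ev A z : eval A SUB z (p1 z - p2 z).
Proof.
  eapply ev_eq. apply rec_ev with (F := fun x => x) (G := fun w => pred (p2 (p2 w))).
  - apply cID_ev.
  - intro. econstructor. econstructor; apply ev_pi2. apply PRED_ev.
  - generalize (p1 z) (p2 z). intros x n. induction n; rsimp; lia.
Qed.

Definition SG := cComp (cRec cZero (cComp cSucc cZero)) (cPair cZero cID).
Lemma SG_ev A z : eval A SG z (min 1 z).
Proof.
  econstructor. econstructor. constructor. apply cID_ev.
  eapply ev_eq. apply rec_ev0 with (F := fun x => 0) (G := fun w => 1).
  constructor. intro; econstructor; constructor.
  destruct z; simpl; auto.
Qed.

Definition NSG := cComp SUB (cPair (ck 1) cID).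
Lemma NSG_ev A z : eval A NSG z (1 - z).
Proof.
  econstructor. econstructor. apply ck_ev. apply cID_ev.
  eapply ev_eq. apply SUB_ev. psimp; auto.
Qed.

Definition LE := cComp NSG SUB.
Lemma LE_ev A z : eval A LE z (if p1 z <=? p2 z then 1 else 0).
Proof.
  econstructor. apply SUB_ev. eapply ev_eq. apply NSG_ev.
  destruct (Nat.leb_spec (p1 z) (p2 z)); lia.
Qed.

Definition IFZ f g := cRec f (cComp g (cPair cPi1 (cComp cPi1 cPi2))).
Lemma IFZ_ev0 A f g u w : eval A f u w -> eval A (IFZ f g) (cpair u 0) w.
Proof. intros; constructor; auto. Qed.
Lemma IFZ_ev1 A f g u y w : eval A f u y -> eval A g (cpair u 0) w -> eval A (IFZ f g) (cpair u 1) w.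
Proof.
  intros. econstructor. constructor. eauto. econstructor.
  econstructor. apply ev_pi1. econstructor; [apply ev_pi2| apply ev_pi1].
  psimp. auto.
Qed.
Lemma IFZ_ev A f g F G : (forall x, eval A f x (F x)) -> (forall z, eval A g z (G z)) ->
  forall z, eval A (IFZ f g) z (match p2 z with 0 => F (p1 z) | S n => G (cpair (p1 z) n) end).
Proof.
  intros hf hg z. eapply ev_eq. apply rec_ev with (F := F) (G := fun w => G (cpair (p1 w) (p1 (p2 w)))).
  auto. intro. econstructor. econstructor. apply ev_pi1. econstructor; [apply ev_pi2| apply ev_pi1]. apply hg.
  destruct (p2 z); rsimp; auto.
Qed.

Definition POW2 := cComp (cRec (ck 1) (cComp ADD (cPair (cComp cPi2 cPi2) (cComp cPi2 cPi2)))) (cPair cZero cID).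
Lemma POW2_ev A z : eval A POW2 z (2 ^ z).
Proof.
  econstructor. econstructor. constructor. apply cID_ev.
  eapply ev_eq. apply rec_ev0 with (F := fun x => 1) (G := fun w => p2 (p2 w) + p2 (p2 w)).
  intro; apply ck_ev. intro. econstructor. econstructor; econstructor; apply ev_pi2.
  eapply ev_eq. apply ADD_ev. psimp; auto.
  induction z; rsimp; simpl; lia.
Qed.

Definition CEIL := cComp (cRec cZero (cComp SUB (cPair (cComp cSucc (cComp cPi1 cPi2)) (cComp cPi2 cPi2)))) (cPair cZero cID).
Lemma CEIL_ev A z : eval A CEIL z (z - z / 2).
Proof.
  econstructor. econstructor. constructor. apply cID_ev.
  eapply ev_eq. apply rec_ev0 with (F := fun x => 0) (G := fun w => S (p1 (p2 w)) - p2 (p2 w)).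
  constructor. intro. econstructor. econstructor. econstructor. econstructor; [apply ev_pi2|apply ev_pi1].
  constructor. econstructor; apply ev_pi2. eapply ev_eq. apply SUB_ev. psimp; auto.
  induction z; rsimp. auto. rewrite IHz.
  assert (h := Nat.div_mod z 2 ltac:(lia)). assert (h2 := Nat.div_mod (S z) 2 ltac:(lia)).
  assert (h3 := Nat.mod_upper_bound z 2 ltac:(lia)). assert (h4 := Nat.mod_upper_bound (S z) 2 ltac:(lia)).
  lia.
Qed.

Definition HALF := cComp SUB (cPair cID CEIL).
Lemma HALF_ev A z : eval A HALF z (z / 2).
Proof.
  econstructor. econstructor. apply cID_ev. apply CEIL_ev.
  eapply ev_eq. apply SUB_ev. psimp. assert (z / 2 <= z) by (apply Nat.div_le_upper_bound; lia). lia.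
Qed.

Definition MODT := cComp SUB (cPair cID (cComp ADD (cPair HALF HALF))).
Lemma MODT_ev A z : eval A MODT z (z mod 2).
Proof.
  econstructor. econstructor. apply cID_ev. econstructor. econstructor; apply HALF_ev. apply ADD_ev.
  eapply ev_eq. apply SUB_ev. psimp. pose proof (Nat.div_mod z 2). lia.
Qed.

Definition TAILF n := (pred n) / 2.
Definition TAIL := cComp HALF PRED.
Lemma TAIL_ev A z : eval A TAIL z (TAILF z).
Proof. econstructor. apply PRED_ev. apply HALF_ev. Qed.

Definition HEADF n := 1 - min 1 n * (n mod 2).
Definition HEAD := cComp NSG (cComp MUL (cPair SG MODT)).
Lemma HEAD_ev A z : eval A HEAD z (HEADF z).
Proof.
  econstructor. econstructor. econstructor. apply SG_ev. apply MODT_ev. apply MUL_ev.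
  eapply ev_eq. apply NSG_ev. psimp. reflexivity.
Qed.

Definition ITERT := cRec cID (cComp TAIL (cComp cPi2 cPi2)).
Lemma ITERT_ev A z : eval A ITERT z (Nat.iter (p2 z) TAILF (p1 z)).
Proof.
  eapply ev_eq. apply rec_ev with (F := fun x => x) (G := fun w => TAILF (p2 (p2 w))).
  apply cID_ev. intro. econstructor. econstructor; apply ev_pi2. apply TAIL_ev.
  generalize (p1 z) (p2 z). intros x n. induction n; rsimp; simpl; congruence.
Qed.

Definition BITF a j := HEADF (Nat.iter j TAILF a).
Definition BIT := cComp HEAD ITERT.
Lemma BIT_ev A z : eval A BIT z (BITF (p1 z) (p2 z)).
Proof. econstructor. apply ITERT_ev. apply HEAD_ev. Qed.

Lemma str_app s t : str_num (s ++ t) = str_num s + 2 ^ length s * str_num t.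
Proof. induction s as [|b s IH]; simpl. lia. rewrite IH. destruct b; lia. Qed.

Lemma TAILF_cons b t : TAILF (str_num (b :: t)) = str_num t.
Proof.
  unfold TAILF; cbn [str_num]. destruct b.
  - replace (pred (2 * str_num t + 2)) with (1 + str_num t * 2) by lia. rewrite Nat.div_add by lia. reflexivity.
  - replace (pred (2 * str_num t + 1)) with (0 + str_num t * 2) by lia. rewrite Nat.div_add by lia. reflexivity.
Qed.

Lemma HEADF_cons b t : HEADF (str_num (b :: t)) = if b then 1 else 0.
Proof.
  unfold HEADF; cbn [str_num]. destruct b.
  - replace (2 * str_num t + 2) with (0 + (str_num t + 1) * 2) by lia. rewrite Nat.Div0.mod_add. rewrite Nat.Div0.mod_0_l. lia.
  - replace (2 * str_num t + 1) with (1 + (str_num t) * 2) by lia. rewrite Nat.Div0.mod_add. simpl.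
    replace (min 1 (1 + str_num t * 2)) with 1 by lia. reflexivity.
Qed.

Lemma TAILF_0 : TAILF 0 = 0. Proof. reflexivity. Qed.
Lemma HEADF_0 : HEADF 0 = 1. Proof. reflexivity. Qed.

Lemma iter_tail_0 j : Nat.iter j TAILF 0 = 0.
Proof. induction j; simpl; auto. rewrite IHj. reflexivity. Qed.

Lemma iter_S {X} j (f : X -> X) x : Nat.iter (S j) f x = Nat.iter j f (f x).
Proof. induction j; simpl; auto. simpl in IHj. rewrite <- IHj. reflexivity. Qed.

Lemma BITF_str s j : BITF (str_num s) j = match nth_error s j with Some b => if b then 1 else 0 | None => 1 end.
Proof.
  unfold BITF. revert j; induction s as [|b s IH]; intros j.
  - simpl. rewrite iter_tail_0. destruct j; reflexivity.
  - destruct j. simpl. apply HEADF_cons. rewrite iter_S, TAILF_cons. apply IH.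
Qed.

Lemma str_len s : length s <= str_num s.
Proof. induction s as [|b s IH]; simpl; try destruct b; lia. Qed.

Lemma divmod_eq x : fst (Nat.divmod x 1 0 1) = x / 2.
Proof. reflexivity. Qed.

Fixpoint ns (k n : nat) : list bool :=
  match k with 0 => [] | S k => match n with 0 => [] | S m =>
    (if Nat.even m then false else true) :: ns k (m / 2) end end.

Lemma ns_spec k n : n <= k -> str_num (ns k n) = n.
Proof.
  revert n; induction k; intros n h; simpl.
  - lia.
  - destruct n. reflexivity. cbn [ns str_num].
    assert (hd := Nat.div_mod n 2 ltac:(lia)).
    assert (hm := Nat.mod_upper_bound n 2 ltac:(lia)).
    assert (n / 2 <= k) by (apply Nat.div_le_upper_bound; lia).
    rewrite IHk by auto.
    destruct (Nat.even n) eqn:E.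
    + apply Nat.even_spec in E. destruct E as [q ->].
      replace (2*q) with (q*2) by lia. rewrite ?divmod_eq. rewrite Nat.div_mul by lia. lia.
    + assert (Nat.odd n = true) by (unfold Nat.odd; rewrite E; auto).
      apply Nat.odd_spec in H0. destruct H0 as [q ->].
      rewrite ?divmod_eq. replace (2*q+1) with (1 + q*2) by lia. rewrite Nat.div_add by lia. replace ((1:nat)/2) with 0 by reflexivity. lia.
Qed.

Definition nstr n := ns n n.
Lemma nstr_spec n : str_num (nstr n) = n.
Proof. apply ns_spec; auto. Qed.

Lemma str_inj s t : str_num s = str_num t -> s = t.
Proof.
  revert t; induction s as [|b s IH]; intros [|c t] h; simpl in h; auto; try (destruct b; lia); try (destruct c; lia).
  destruct b, c; try lia; f_equal; apply IH; lia.
Qed.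

Fixpoint minloop (h : nat -> nat) (n : nat) : nat :=
  match n with
  | 0 => 0
  | S n' => match minloop h n' with
            | 0 => match h n' with 0 => 1 | 1 => S (S n') | _ => 0 end
            | s => s end
  end.

Fixpoint clk (c : code) (x t : nat) : nat :=
  match c with
  | cZero => 1
  | cSucc => S (S x)
  | cPi1 => S (p1 x)
  | cPi2 => S (p2 x)
  | cOracle => 1
  | cComp f g => match clk g x t with 0 => 0 | S y => clk f y t end
  | cPair f g => match clk f x t with 0 => 0 | S y =>
                   match clk g x t with 0 => 0 | S z => S (cpair y z) end end
  | cRec f g => nat_rect (fun _ => nat) (clk f (p1 x) t)
      (fun i r => match r with 0 => 0 | S y => clk g (cpair (p1 x) (cpair i y)) t end) (p2 x)
  | cMin f => minloop (fun y => clk f (cpair x y) t) (S t) - 1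
  end.

Definition c11 := cComp cPi1 cPi1.
Definition c21 := cComp cPi2 cPi1.
Definition c12 := cComp cPi1 cPi2.
Definition c22 := cComp cPi2 cPi2.

Fixpoint Clk (c : code) : code :=
  match c with
  | cZero => ck 1
  | cSucc => cComp cSucc (cComp cSucc cPi1)
  | cPi1 => cComp cSucc (cComp cPi1 cPi1)
  | cPi2 => cComp cSucc (cComp cPi2 cPi1)
  | cOracle => ck 1
  | cComp f g => cComp (IFZ (ck 0) (cComp (Clk f) (cPair cPi2 c21))) (cPair cID (Clk g))
  | cPair f g => cComp (IFZ (ck 0)
        (cComp (IFZ (ck 0) (cComp cSucc (cPair c21 cPi2))) (cPair cID (cComp (Clk g) cPi1))))
      (cPair cID (Clk f))
  | cRec f g => cComp (cRec (Clk f)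
        (cComp (IFZ (ck 0)
           (cComp (Clk g) (cPair (cPair (cComp cPi1 c11) (cPair (cComp cPi1 c21) cPi2)) (cComp cPi2 c11))))
         (cPair cID c22)))
      (cPair (cPair c11 cPi2) c21)
  | cMin f => cComp PRED (cComp (cRec (ck 0)
        (cComp (IFZ
            (cComp (IFZ (ck 1) (IFZ (cComp cSucc (cComp cSucc cPi2)) (ck 0)))
               (cPair cID (cComp (Clk f) (cPair (cPair c11 cPi2) c21))))
            (cComp cSucc cPi2))
          (cPair (cPair cPi1 c12) c22)))
      (cPair cID (cComp cSucc cPi2)))
  end.

Ltac ev := repeat first
  [ apply ev_pi1 | apply ev_pi2 | apply e_zero | apply e_succ | apply cID_ev | apply ck_ev
  | eapply e_comp | eapply e_pair ].

Lemma Clk_ev A c : forall m, eval A (Clk c) m (clk c (p1 m) (p2 m)).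
Proof.
  induction c; intro m; cbn [Clk clk].
  - apply ck_ev.
  - ev.
  - ev.
  - ev.
  - apply ck_ev.
  - eapply e_comp. eapply e_pair. apply cID_ev. apply IHc2.
    eapply ev_eq. apply IFZ_ev with (F := fun _ => 0)
      (G := fun w => clk c1 (p2 w) (p2 (p1 w))).
    intros; apply ck_ev. intro z. eapply e_comp. ev. eapply ev_eq. apply IHc1. psimp. reflexivity.
    simpl. psimp. destruct (clk c2 (p1 m) (p2 m)); psimp; auto.
  - eapply e_comp. eapply e_pair. apply cID_ev. apply IHc1.
    eapply ev_eq. apply IFZ_ev with (F := fun _ => 0)
      (G := fun w => match clk c2 (p1 (p1 w)) (p2 (p1 w)) with 0 => 0 | S n => S (cpair (p2 w) n) end).
    intros; apply ck_ev.
    intro z. eapply e_comp. eapply e_pair. apply cID_ev. eapply e_comp. apply ev_pi1. apply IHc2.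
    eapply ev_eq. apply IFZ_ev with (F := fun _ => 0) (G := fun w => S (cpair (p2 (p1 w)) (p2 w))).
    intros; apply ck_ev. intro; ev. psimp. destruct (clk c2 _ _); psimp; auto.
    simpl. psimp. destruct (clk c1 (p1 m) (p2 m)); psimp; auto.
  - eapply e_comp. ev. eapply ev_eq. apply rec_ev with (F := fun P => clk c1 (p1 P) (p2 P))
      (G := fun w => match p2 (p2 w) with 0 => 0 | S y =>
          clk c2 (cpair (p1 (p1 w)) (cpair (p1 (p2 w)) y)) (p2 (p1 w)) end).
    apply IHc1. intro z. eapply e_comp. ev.
    eapply ev_eq. apply IFZ_ev with (F := fun _ => 0)
      (G := fun u => clk c2 (cpair (p1 (p1 (p1 u))) (cpair (p1 (p2 (p1 u))) (p2 u))) (p2 (p1 (p1 u)))).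
    intros; apply ck_ev. intro. eapply e_comp. ev. eapply ev_eq. apply IHc2. psimp. reflexivity.
    psimp. destruct (p2 (p2 z)); psimp; auto.
    psimp. unfold recv. generalize (p2 (p1 m)). intro n. induction n; simpl; psimp; auto.
    rewrite IHn. reflexivity.
  - eapply e_comp. eapply e_comp. ev. eapply ev_eq.
    apply rec_ev with (F := fun _ => 0)
      (G := fun w => match p2 (p2 w) with
         | 0 => match clk c (cpair (p1 (p1 w)) (p1 (p2 w))) (p2 (p1 w)) with
                | 0 => 1 | S n => match n with 0 => S (S (p1 (p2 w))) | S _ => 0 end end
         | S s => S s end).
    intros; apply ck_ev.
    intro z. eapply e_comp. ev. eapply ev_eq. apply IFZ_ev with
      (F := fun u => match clk c (cpair (p1 (p1 u)) (p2 u)) (p2 (p1 u)) with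
                | 0 => 1 | S n => match n with 0 => S (S (p2 u)) | S _ => 0 end end)
      (G := fun w => S (p2 w)).
    intro u. eapply e_comp. eapply e_pair. apply cID_ev. eapply e_comp. ev. apply IHc.
    eapply ev_eq. apply IFZ_ev with (F := fun _ => 1)
      (G := fun w => match p2 w with 0 => S (S (p2 (p1 w))) | S _ => 0 end).
    intros; apply ck_ev. intro w. eapply ev_eq. apply IFZ_ev with (F := fun u => S (S (p2 u))) (G := fun _ => 0).
    intros; ev. intros; apply ck_ev. destruct (p2 w); psimp; auto.
    psimp. destruct (clk c _ _) as [|[|]]; psimp; auto.
    intro; ev. psimp. destruct (p2 (p2 z)); psimp; auto.
    reflexivity. eapply ev_eq. apply PRED_ev.
    psimp. rewrite <- Nat.sub_1_r. f_equal. unfold recv.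
    generalize (S (p2 m)). intro n. induction n; simpl; psimp; auto.
    rewrite IHn. destruct (minloop _ n); auto.
Qed.

Lemma ml_d h n : minloop h n = 0 -> forall k, k < n -> 2 <= h k.
Proof.
  induction n; simpl; intros H k hk. lia.
  destruct (minloop h n) eqn:E.
  - destruct (h n) as [|[|]] eqn:E2; try discriminate.
    assert (k < n \/ k = n) as [|] by lia; subst; auto. rewrite E2; lia.
  - discriminate.
Qed.

Lemma ml_a h n : (forall k, k < n -> 2 <= h k) -> minloop h n = 0.
Proof.
  induction n; simpl; intros H; auto. rewrite IHn by auto.
  specialize (H n ltac:(lia)). destruct (h n) as [|[|]]; auto; lia.
Qed.

Lemma ml_b h n y : y < n -> (forall k, k < y -> 2 <= h k) -> h y = 1 -> minloop h n = S (S y).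
Proof.
  induction n; simpl; intros. lia.
  assert (y < n \/ y = n) as [|] by lia.
  - rewrite IHn; auto.
  - subst. rewrite ml_a by auto. rewrite H1. auto.
Qed.

Lemma ml_c h n y : minloop h n = S (S y) -> y < n /\ h y = 1 /\ forall k, k < y -> 2 <= h k.
Proof.
  induction n; simpl; intros H. discriminate.
  destruct (minloop h n) eqn:E.
  - pose proof (ml_d h n E).
    destruct (h n) as [|[|]] eqn:E2; try discriminate. injection H as <-. auto.
  - destruct (IHn H) as [? [? ?]]. split; auto.
Qed.

Lemma clk_sound c : forall x t v, clk c x t = S v -> eval empty_set c x v.
Proof.
  induction c; intros x t v H; cbn [clk] in H.
  - injection H as <-. constructor.
  - injection H as <-. constructor.
  - injection H as <-. apply ev_pi1.
  - injection H as <-. apply ev_pi2.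
  - injection H as <-. constructor. auto.
  - destruct (clk c2 x t) eqn:E; try discriminate. econstructor; eauto.
  - destruct (clk c1 x t) eqn:E; try discriminate.
    destruct (clk c2 x t) eqn:E2; try discriminate. injection H as <-. constructor; eauto.
  - rewrite <- (cpair_p x). revert v H. generalize (p2 x). intros n. induction n; simpl; intros v H.
    + constructor. eauto.
    + destruct (nat_rect _ _ _ n) eqn:E; try discriminate. econstructor. apply IHn. auto. eauto.
  - destruct (minloop _ (S t)) as [|[|y]] eqn:E; simpl in H; try discriminate.
    simpl in H. rewrite ?Nat.sub_0_r in H. injection H as <-.
    apply ml_c in E. destruct E as [_ [h1 h2]].
    apply e_min. apply (IHc _ t); auto. intros k hk. specialize (h2 k hk).
    destruct (clk c (cpair x k) t) as [|[|w]] eqn:E; try lia. exists (S w); split; eauto.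
Qed.

Lemma bound_list (P : nat -> nat -> Prop) y :
  (forall k T T', T <= T' -> P k T -> P k T') ->
  (forall k, k < y -> exists T, P k T) -> exists T, forall k, k < y -> P k T.
Proof.
  intros mono H. induction y.
  - exists 0; intros; lia.
  - destruct IHy as [T1 h1]. intros; apply H; lia.
    destruct (H y ltac:(lia)) as [T2 h2].
    exists (max T1 T2). intros k hk. assert (k < y \/ k = y) as [|] by lia.
    + eapply mono; [|apply h1; auto]. lia.
    + subst. eapply mono; [|apply h2]. lia.
Qed.

Lemma clk_complete c x v : eval empty_set c x v -> exists T, forall t, T <= t -> clk c x t = S v.
Proof.
  revert c x v. apply (eval_ind2 empty_set (fun c x v => exists T, forall t, T <= t -> clk c x t = S v)).
  - exists 0; auto.
  - exists 0; auto.
  - exists 0; intros; simpl; rewrite p1c; auto.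
  - exists 0; intros; simpl; rewrite p2c; auto.
  - intros x h; destruct h.
  - exists 0; auto.
  - intros f g x y z _ [T1 h1] _ [T2 h2]. exists (max T1 T2). intros t ht. simpl.
    rewrite h1 by lia. apply h2; lia.
  - intros f g x y z _ [T1 h1] _ [T2 h2]. exists (max T1 T2). intros t ht. simpl.
    rewrite h1 by lia. rewrite h2 by lia. auto.
  - intros f g x y _ [T1 h1]. exists T1. intros t ht. simpl. psimp. simpl. auto.
  - intros f g x n y z _ [T1 h1] _ [T2 h2]. exists (max T1 T2). intros t ht.
    specialize (h1 t ltac:(lia)). simpl in *. psimp. simpl. rewrite h1. apply h2; lia.
  - intros f x y _ [T0 h0] hk.
    destruct (bound_list (fun k T => exists v, v <> 0 /\ forall t, T <= t -> clk f (cpair x k) t = S v) y)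
      as [T1 h1].
    + intros k T T' hT [v [hv hh]]. exists v; split; auto. intros; apply hh; lia.
    + intros k hkk. destruct (hk k hkk) as [v [hv [_ [T hT]]]]. exists T, v; auto.
    + exists (max y (max T0 T1)). intros t ht. cbn [clk].
      rewrite (ml_b _ _ y). lia. lia.
      * intros k hkk. destruct (h1 k hkk) as [v [hv hh]]. rewrite hh by lia. lia.
      * apply h0; lia.
Qed.

Lemma code_num_inj c d : code_num c = code_num d -> c = d.
Proof.
  revert d; induction c; intros [] h; simpl in h; cpinj; try discriminate; auto;
  try (f_equal; auto).
Qed.

Definition constnum k := code_num (ck k).

Definition CN := cComp (cRec (ck (cpair 0 0)) (cPair (ck 5) (cPair (ck (cpair 1 0)) c22))) (cPair cZero cID).
Lemma CN_ev A k : eval A CN k (constnum k).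
Proof.
  econstructor. econstructor. constructor. apply cID_ev.
  eapply ev_eq. apply rec_ev0 with (F := fun _ => cpair 0 0) (G := fun w => cpair 5 (cpair (cpair 1 0) (p2 (p2 w)))).
  intros; apply ck_ev. intro. ev.
  unfold constnum. induction k; rsimp; simpl; auto.
Qed.

Fixpoint quote (c : code) : code :=
  match c with
  | cZero => ck (cpair 0 0)
  | cSucc => ck (cpair 1 0)
  | cPi1 => ck (cpair 2 0)
  | cPi2 => ck (cpair 3 0)
  | cOracle => ck (cpair 4 0)
  | cComp f g => cPair (ck 5) (cPair (quote f) (quote g))
  | cPair f g => cPair (ck 6) (cPair (quote f) (quote g))
  | cRec f g => cPair (ck 7) (cPair (quote f) (quote g))
  | cMin f => cPair (ck 8) (quote f)
  end.
Lemma quote_ev A c x : eval A (quote c) x (code_num c).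
Proof. induction c; cbn [quote code_num]; try apply ck_ev; repeat (apply e_pair; auto); apply ck_ev. Qed.

Lemma inv_comp A f g x z : eval A (cComp f g) x z -> exists y, eval A g x y /\ eval A f y z.
Proof. intros h; inversion h; subst; eauto. Qed.
Lemma inv_pair A f g x z : eval A (cPair f g) x z -> exists y w, z = cpair y w /\ eval A f x y /\ eval A g x w.
Proof. intros h; inversion h; subst; eauto. Qed.
Lemma inv_min A f x y : eval A (cMin f) x y -> eval A f (cpair x y) 0 /\
   (forall k, k < y -> exists v, v <> 0 /\ eval A f (cpair x k) v).
Proof. intros h; inversion h; subst; eauto. Qed.

Definition CHK := cMin (cComp SUB cPi1).
Lemma CHK_halt A p j v : eval A CHK (cpair p j) v -> p <= j.
Proof.
  intros h. apply inv_min in h as [h _]. apply inv_comp in h as [y [h1 h2]].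
  apply (eval_det _ _ _ _ (ev_pi1 A _)) in h1. subst. 
  apply (eval_det _ _ _ _ (SUB_ev A _)) in h2. psimp. lia.
Qed.
Lemma CHK_ev A p j : p <= j -> eval A CHK (cpair p j) 0.
Proof.
  intros. constructor. ev. eapply ev_eq. apply SUB_ev. psimp. lia. intros; lia.
Qed.

Lemma ck_det A k x y : eval A (ck k) x y -> y = k.
Proof. intros h. apply (eval_det _ _ _ _ h). apply ck_ev. Qed.

Definition qcode E X := cComp (cMin E) (ck X).
Definition qnum e X := cpair 5 (cpair (cpair 8 e) (constnum X)).
Lemma qnum_code E X : code_num (qcode E X) = qnum (code_num E) X.
Proof. reflexivity. Qed.

Lemma chk_ex : { n | n = code_num CHK }.
Proof. exists (code_num CHK); reflexivity. Qed.
Definition NCHK := proj1_sig chk_ex.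
Lemma NCHK_eq : NCHK = code_num CHK.
Proof. exact (proj2_sig chk_ex). Qed.

Definition wcode E X j := cComp CHK (cPair (qcode E X) (ck j)).
Definition wnum e X j := cpair 5 (cpair NCHK (cpair 6 (cpair (qnum e X) (constnum j)))).
Lemma wnum_code E X j : code_num (wcode E X j) = wnum (code_num E) X j.
Proof. unfold wnum. rewrite NCHK_eq. reflexivity. Qed.

Lemma Kq e X : jump0 (qnum e X) <-> exists E, code_num E = e /\ exists p, eval empty_set (cMin E) X p.
Proof.
  split.
  - intros [c [hc [v hv]]]. destruct c; simpl in hc; unfold qnum in hc; cpinj; try discriminate.
    destruct c1; simpl in *; cpinj; try discriminate.
    exists c1; split; auto. apply inv_comp in hv as [y [h1 h2]].
    change (code_num c2 = code_num (ck X)) in H1. apply code_num_inj in H1. subst.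
    apply ck_det in h1. subst. eauto.
  - intros [E [<- [p hp]]]. exists (qcode E X). split. reflexivity. exists p.
    econstructor. apply ck_ev. auto.
Qed.

Lemma Kw e X j : jump0 (wnum e X j) <-> exists E, code_num E = e /\ exists p, eval empty_set (cMin E) X p /\ p <= j.
Proof.
  split.
  - intros [c [hc [v hv]]]. unfold wnum in hc. set (N := NCHK) in hc. assert (HN : N = code_num CHK) by apply NCHK_eq. clearbody N.
    destruct c; cbn [code_num] in hc; apply cpair_inj in hc; destruct hc as [h0 hc]; try discriminate h0.
    apply cpair_inj in hc; destruct hc as [h1 hc]. rewrite HN in h1. apply code_num_inj in h1. subst.
    destruct c2; cbn [code_num] in hc; apply cpair_inj in hc; destruct hc as [h00 hc]; try discriminate h00.
    apply cpair_inj in hc; destruct hc as [h1 hc]. unfold qnum in h1.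
    destruct c2_1; cbn [code_num] in h1; apply cpair_inj in h1; destruct h1 as [h0' h1]; try discriminate h0'.
    apply cpair_inj in h1; destruct h1 as [h2 h3].
    destruct c2_1_1; cbn [code_num] in h2; apply cpair_inj in h2; destruct h2 as [h0'' h2]; try discriminate h0''.
    change (code_num c2_1_2 = code_num (ck X)) in h3. apply code_num_inj in h3. subst.
    change (code_num c2_2 = code_num (ck j)) in hc. apply code_num_inj in hc. subst.
    exists c2_1_1; split; auto.
    apply inv_comp in hv as [y [h1 h2]]. apply inv_pair in h1 as [y1 [w [-> [h3 h4]]]].
    apply ck_det in h4. subst. apply inv_comp in h3 as [z [h5 h6]]. apply ck_det in h5; subst.
    exists y1. split; auto. eapply CHK_halt; eauto.
  - intros [E [<- [p [hp hj]]]]. exists (wcode E X j). split. apply wnum_code. exists 0. rewrite <- wnum_code.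
    econstructor. econstructor. econstructor. apply ck_ev. apply hp. apply ck_ev.
    apply CHK_ev; auto.
Qed.

Definition pb (P : Prop) : nat := if excluded_middle_informative P then 1 else 0.

Lemma join_even Z K k : join Z K (2 * k) <-> Z k.
Proof.
  unfold join; split.
  - intros [[k' [h1 h2]]|[k' [h1 h2]]]. replace k with k' by lia; auto. lia.
  - intros; left; eauto.
Qed.
Lemma join_odd Z K k : join Z K (2 * k + 1) <-> K k.
Proof.
  unfold join; split.
  - intros [[k' [h1 h2]]|[k' [h1 h2]]]. lia. replace k with k' by lia; auto.
  - intros; right; eauto.
Qed.

Definition ZQ := cComp cOracle (cComp ADD (cPair cID cID)).
Lemma ZQ_ev Z K i : eval (join Z K) ZQ i (pb (Z i)).
Proof.
  econstructor. econstructor. econstructor; apply cID_ev. apply ADD_ev. psimp.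
  unfold pb; destruct (excluded_middle_informative (Z i)); constructor;
  replace (i + i) with (2 * i) by lia; rewrite join_even; auto.
Qed.
Definition KQ := cComp cOracle (cComp cSucc (cComp ADD (cPair cID cID))).
Lemma KQ_ev Z K i : eval (join Z K) KQ i (pb (K i)).
Proof.
  econstructor. econstructor. econstructor. econstructor; apply cID_ev. apply ADD_ev. constructor. psimp.
  unfold pb; destruct (excluded_middle_informative (K i)); constructor;
  replace (S (i + i)) with (2 * i + 1) by lia; rewrite join_odd; auto.
Qed.

Definition Pc c := cComp NSG (cComp SG (cComp (Clk c)
   (cPair (cComp ADD (cPair c11 (cComp MUL (cPair (cComp POW2 c21) c12)))) c22))).
Lemma Pc_ev A c z : eval A (Pc c) z
  (1 - min 1 (clk c (p1 (p1 z) + 2 ^ p2 (p1 z) * p1 (p2 z)) (p2 (p2 z)))).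
Proof.
  econstructor. econstructor. econstructor. econstructor.
  econstructor. econstructor. ev. econstructor. econstructor. econstructor. ev. apply POW2_ev. ev.
  apply MUL_ev. apply ADD_ev. ev. apply Clk_ev. apply SG_ev. eapply ev_eq. apply NSG_ev. psimp. reflexivity.
Qed.

Definition rep s := cpair (str_num s) (length s).

Lemma min_exists A f x : (forall y, exists v, eval A f (cpair x y) v) ->
  forall y0, eval A f (cpair x y0) 0 -> exists y, eval A (cMin f) x y.
Proof.
  intros tot y0. induction y0 as [y0 IH] using (well_founded_induction lt_wf). intros h0.
  destruct (classic (exists k, k < y0 /\ eval A f (cpair x k) 0)) as [[k [hk1 hk2]]|hn].
  - eapply IH; eauto.
  - exists y0. constructor; auto. intros k hk. destruct (tot k) as [v hv]. exists v; split; auto.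
    intro; subst. apply hn; eauto.
Qed.

Lemma req_wit c s p : eval empty_set (cMin (Pc c)) (rep s) p -> exists v, eval empty_set c (str_num (s ++ nstr (p1 p))) v.
Proof.
  intros h. apply inv_min in h as [h _]. apply (eval_det _ _ _ _ (Pc_ev _ _ _)) in h. unfold rep in h. psimp.
  destruct (clk c _ _) eqn:E. simpl in h; discriminate.
  exists n. apply clk_sound in E. rewrite str_app, nstr_spec. auto.
Qed.

Lemma req_yes c s : (exists p, eval empty_set (cMin (Pc c)) (rep s) p) <-> exists u v, eval empty_set c (str_num (s ++ u)) v.
Proof.
  split.
  - intros [p hp]. apply req_wit in hp. eauto.
  - intros [u [v hv]]. apply clk_complete in hv as [T hT].
    apply min_exists with (y0 := cpair (str_num u) T).
    + intros; eexists; apply Pc_ev.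
    + eapply ev_eq. apply Pc_ev. unfold rep. psimp. rewrite <- str_app. rewrite hT; auto.
Qed.

Global Opaque cID ADD MUL PRED SUB SG NSG LE POW2 CEIL HALF MODT TAIL HEAD ITERT BIT CN CHK ZQ KQ.

Ltac ev2 := repeat first
  [ apply ev_pi1 | apply ev_pi2 | apply e_zero | apply e_succ | apply cID_ev | apply ck_ev
  | apply ADD_ev | apply MUL_ev | apply PRED_ev | apply SUB_ev | apply SG_ev | apply NSG_ev
  | apply LE_ev | apply POW2_ev | apply HALF_ev | apply MODT_ev | apply TAIL_ev | apply HEAD_ev
  | apply ITERT_ev | apply BIT_ev | apply CN_ev | solve [eauto 1 with evdb]
  | eapply e_comp | eapply e_pair ].

Lemma ones_str k : str_num (repeat true k) = 2 ^ (S k) - 2.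
Proof. induction k; simpl in *; auto. rewrite IHk. assert (1 <= 2 ^ k) by (apply Nat.pow_le_mono_r with (a:=2) (b:=0); lia); lia. Qed.

Definition ONES := cComp SUB (cPair (cComp POW2 cSucc) (ck 2)).
Lemma ONES_ev A k : eval A ONES k (str_num (repeat true k)).
Proof. eapply ev_eq. ev2. psimp. rewrite ones_str. auto. Qed.
Global Opaque ONES. Global Hint Resolve ONES_ev : evdb.

Definition RHO := cPair (cComp ADD (cPair c11 (cComp MUL (cPair (cComp POW2 c21) (cComp ONES cPi2)))))
   (cComp ADD (cPair c21 cPi2)).
Lemma RHO_ev A s k : eval A RHO (cpair (rep s) k) (rep (s ++ repeat true k)).
Proof.
  eapply ev_eq. ev2.
  unfold rep. psimp. rewrite str_app, app_length, repeat_length. reflexivity.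
Qed.

Definition LENF n := recv (fun _ => 0) (fun w => p2 (p2 w) + min 1 (Nat.iter (p1 (p2 w)) TAILF (p1 w))) n n.
Definition LEN := cComp (cRec (ck 0) (cComp ADD (cPair c22 (cComp SG (cComp ITERT (cPair cPi1 c12)))))) (cPair cID cID).
Lemma LEN_ev A n : eval A LEN n (LENF n).
Proof.
  econstructor. ev2. eapply ev_eq. apply rec_ev with (F := fun _ => 0)
    (G := fun w => p2 (p2 w) + min 1 (Nat.iter (p1 (p2 w)) TAILF (p1 w))). intros; apply ck_ev.
  intro. eapply ev_eq. ev2. psimp. reflexivity. psimp. reflexivity.
Qed.
Global Opaque LEN. Global Hint Resolve LEN_ev : evdb.

Lemma iter_tail_skip s i : Nat.iter i TAILF (str_num s) = str_num (skipn i s).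
Proof.
  revert s; induction i; intros s; [reflexivity|].
  rewrite iter_S. destruct s as [|b s].
  - simpl. rewrite TAILF_0, iter_tail_0. destruct i; reflexivity.
  - rewrite TAILF_cons. apply IHi.
Qed.

Lemma LENF_str s : LENF (str_num s) = length s.
Proof.
  unfold LENF. assert (forall m, recv (fun _ => 0) (fun w => p2 (p2 w) + min 1 (Nat.iter (p1 (p2 w)) TAILF (p1 w))) (str_num s) m = min m (length s)).
  { induction m; rsimp; auto. rewrite IHm, iter_tail_skip.
    destruct (Nat.lt_ge_cases m (length s)).
    - assert (skipn m s <> []). { intro h. apply (f_equal (@length bool)) in h. rewrite length_skipn in h. simpl in h. lia. }
      destruct (skipn m s) as [|b t]; [congruence|]. simpl str_num. destruct b; lia.
    - rewrite skipn_all2 by lia. cbn [str_num]. lia. }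
  rewrite H. pose proof (str_len s). lia.
Qed.

Definition APP := cPair (cComp ADD (cPair c11 (cComp MUL (cPair (cComp POW2 c21) cPi2))))
   (cComp ADD (cPair c21 (cComp LEN cPi2))).
Lemma APP_ev A s r : eval A APP (cpair (rep s) r) (rep (s ++ nstr r)).
Proof.
  eapply ev_eq. ev2.
  unfold rep. psimp. rewrite str_app, app_length, nstr_spec. rewrite <- (LENF_str (nstr r)), nstr_spec. reflexivity.
Qed.

Definition APP1 := cPair (cComp ADD (cPair cPi1 (cComp MUL (cPair (cComp POW2 cPi2) (ck 2)))))
   (cComp cSucc cPi2).
Lemma APP1_ev A s : eval A APP1 (rep s) (rep (s ++ [true])).
Proof.
  eapply ev_eq. ev2.
  unfold rep. psimp. rewrite str_app, app_length. simpl. f_equal. lia.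
Qed.

Lemma HEADF_01 n : HEADF n = 0 \/ HEADF n = 1.
Proof. unfold HEADF. pose proof (Nat.mod_upper_bound n 2). lia. Qed.

Definition CONSG := cComp MUL (cPair c22 (cComp NSG (cComp MUL (cPair (cComp ZQ (cComp ADD (cPair c11 c12)))
   (cComp NSG (cComp BIT (cPair c21 c12))))))).
Definition CONS := cComp (cRec (ck 1) CONSG) (cPair cID cPi2).

Lemma pb_1 P : P -> pb P = 1.
Proof. unfold pb; destruct (excluded_middle_informative P); tauto. Qed.
Lemma pb_0 P : ~ P -> pb P = 0.
Proof. unfold pb; destruct (excluded_middle_informative P); tauto. Qed.

Lemma CONS_ev Z K L r : eval (join Z K) CONS (cpair L r) (pb (forall j, j < r -> Z (L + j) -> BITF r j = 1)).
Proof.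
  econstructor. ev2. eapply ev_eq. apply rec_ev with (F := fun _ => 1)
   (G := fun z => p2 (p2 z) * (1 - pb (Z (p1 (p1 z) + p1 (p2 z))) * (1 - BITF (p2 (p1 z)) (p1 (p2 z))))).
  intros; apply ck_ev. intro. eapply ev_eq. unfold CONSG. ev2. apply ZQ_ev. psimp. reflexivity. psimp.
  assert (forall m, recv (fun _ => 1) (fun z => p2 (p2 z) * (1 - pb (Z (p1 (p1 z) + p1 (p2 z))) * (1 - BITF (p2 (p1 z)) (p1 (p2 z)))))
     (cpair L r) m = pb (forall j, j < m -> Z (L + j) -> BITF r j = 1)).
  { induction m; rsimp.
    - rewrite pb_1; auto. intros; lia.
    - rewrite IHm. destruct (classic (forall j, j < m -> Z (L + j) -> BITF r j = 1)) as [h|h].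
      + rewrite (pb_1 _ h). destruct (classic (Z (L + m))) as [hz|hz].
        * rewrite (pb_1 _ hz). unfold BITF. destruct (HEADF_01 (Nat.iter m TAILF r)) as [e|e]; rewrite e.
          -- rewrite pb_0. reflexivity. intro h'. specialize (h' m ltac:(lia) hz). rewrite e in h'. discriminate.
          -- rewrite pb_1. reflexivity. intros j hj hzj. assert (j < m \/ j = m) as [|] by lia; [apply h; auto | subst; auto].
        * rewrite (pb_0 _ hz). rewrite pb_1. lia. intros j hj hzj. assert (j < m \/ j = m) as [|] by lia; [apply h; auto | subst; tauto].
      + rewrite (pb_0 _ h). transitivity 0. lia. symmetry. apply pb_0. intro h'. apply h. intros; apply h'; auto. }
  apply H.
Qed.
Global Opaque RHO APP APP1 CONS.
Global Hint Resolve RHO_ev APP_ev APP1_ev : evdb.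

Definition rho (s : list bool) k := s ++ repeat true k.
Definition yes e s k := jump0 (qnum e (rep (rho s k))).
Definition witP e s k p := exists E, code_num E = e /\ eval empty_set (cMin E) (rep (rho s k)) p.
Definition wit e s k : nat := epsilon (inhabits 0) (witP e s k).

Lemma wit_spec e s k : yes e s k -> exists E, code_num E = e /\ eval empty_set (cMin E) (rep (rho s k)) (wit e s k).
Proof.
  intros h. apply Kq in h. destruct h as [E [hE [p hp]]].
  assert (witP e s k (wit e s k)). { unfold wit. apply epsilon_spec. exists p, E; auto. }
  destruct H as [E' [h1 h2]]. eauto.
Qed.

Lemma wit_unique e s k E p : code_num E = e -> eval empty_set (cMin E) (rep (rho s k)) p -> yes e s k /\ wit e s k = p.
Proof.
  intros hE hp. assert (hy : yes e s k). { apply Kq. eauto. }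
  split; auto. destruct (wit_spec _ _ _ hy) as [E' [h1 h2]]. rewrite <- hE in h1. apply code_num_inj in h1. subst.
  eapply eval_det; eauto.
Qed.

Definition tau e s k := rho s k ++ nstr (p1 (wit e s k)).
Definition cons_ok (Z : nat -> Prop) (s : list bool) k r := forall j, j < r -> Z (length s + k + j) -> BITF r j = 1.
Definition stop Z e s k := ~ yes e s k \/ (yes e s k /\ cons_ok Z s k (p1 (wit e s k))).
Definition kstarP Z e s k := stop Z e s k /\ forall k', k' < k -> ~ stop Z e s k'.
Definition kstar Z e s := epsilon (inhabits 0) (kstarP Z e s).
Definition next Z e s :=
  (if excluded_middle_informative (yes e s (kstar Z e s)) then tau e s (kstar Z e s) else rho s (kstar Z e s)) ++ [true].
Fixpoint sig Z e := match e with 0 => [] | S e => next Z e (sig Z e) end.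
Definition Gset Z n := nth n (sig Z (S n)) false = true.

Definition consistent (Z : nat -> Prop) (s : list bool) := forall i, i < length s -> Z i -> nth i s false = true.

Lemma least_exists (P : nat -> Prop) n : P n -> exists k, P k /\ forall k', k' < k -> ~ P k'.
Proof.
  induction n as [n IH] using (well_founded_induction lt_wf). intros h.
  destruct (classic (exists k, k < n /\ P k)) as [[k [hk pk]]|hn].
  - eapply IH; eauto.
  - exists n; split; auto. intros k' hk' pk'. apply hn; eauto.
Qed.

Lemma kstar_spec Z e s : (exists k, stop Z e s k) -> kstarP Z e s (kstar Z e s).
Proof.
  intros [k hk]. unfold kstar. apply epsilon_spec. apply (least_exists _ k hk).
Qed.

Definition STEPC E R := cComp ADD (cPair (cComp cSucc c22) (cComp cPi1 (cComp (cMin E) (cComp RHO (cPair (ck R) c22))))).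
Definition FC E R L := cComp ADD (cPair (ck L) (cComp (cRec (ck 0) (STEPC E R)) (cPair cZero cID))).

Fixpoint gseq e s i := match i with 0 => 0 | S i => gseq e s i + 1 + p1 (wit e s (gseq e s i)) end.

Lemma stop_exists Z e s : hyperimmune Z -> exists k, stop Z e s k.
Proof.
  intros [_ HZ]. apply NNPP. intro hn.
  assert (hy : forall k, yes e s k). { intros k. apply NNPP. intro h. apply hn. exists k. left; auto. }
  assert (hc : forall k, ~ cons_ok Z s k (p1 (wit e s k))). { intros k h. apply hn. exists k. right; auto. }
  destruct (wit_spec _ _ _ (hy 0)) as [E [hE _]].
  assert (hw : forall k, eval empty_set (cMin E) (rep (rho s k)) (wit e s k)).
  { intros k. destruct (wit_spec _ _ _ (hy k)) as [E' [h1 h2]]. rewrite <- hE in h1. apply code_num_inj in h1. subst; auto. }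
  set (F := fun i => length s + gseq e s i).
  assert (hF : computable_fun F).
  { exists (FC E (rep s) (length s)). intros i. unfold FC.
    eapply ev_eq. ev2. apply rec_ev0 with (F := fun _ => 0) (G := fun w => S (p2 (p2 w)) + p1 (wit e s (p2 (p2 w)))).
    intros; apply ck_ev. intro z. unfold STEPC. eapply ev_eq. ev2. psimp. reflexivity.
    psimp. unfold F. f_equal. induction i; rsimp; cbn [gseq]; auto. rewrite IHi. lia. }
  assert (hi : increasing F). { intro i. unfold F. simpl. lia. }
  destruct (HZ F hF hi) as [i hzi]. apply (hc (gseq e s i)).
  intros j hj hz. exfalso. apply (hzi (length s + gseq e s i + j)); auto.
  - unfold F; lia.
  - unfold F; simpl. lia.
Qed.

Lemma nth_repeat_true i k : i < k -> nth i (repeat true k) false = true.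
Proof. revert i; induction k; intros [|i] h; simpl; auto; try lia. apply IHk; lia. Qed.

Lemma consistent_app Z s t : consistent Z s ->
  (forall j, j < length t -> Z (length s + j) -> nth j t false = true) -> consistent Z (s ++ t).
Proof.
  intros hs ht i hi hz. rewrite app_length in hi.
  destruct (Nat.lt_ge_cases i (length s)).
  - rewrite app_nth1 by auto. auto.
  - rewrite app_nth2 by auto. apply ht. lia. replace (length s + (i - length s)) with i by lia. auto.
Qed.

Lemma consistent_rho Z s k : consistent Z s -> consistent Z (rho s k).
Proof.
  intros h. apply consistent_app; auto. intros j hj _. rewrite repeat_length in hj. apply nth_repeat_true; auto.
Qed.

Lemma nstr_bit r j : j < length (nstr r) -> BITF r j = 1 -> nth j (nstr r) false = true.
Proof.
  intros hj hb. rewrite <- (nstr_spec r) in hb. rewrite BITF_str in hb.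
  destruct (nth_error (nstr r) j) eqn:E.
  - apply nth_error_nth with (d := false) in E. rewrite E. destruct b; auto; discriminate.
  - apply nth_error_None in E. lia.
Qed.

Lemma consistent_tau Z e s k : consistent Z s -> cons_ok Z s k (p1 (wit e s k)) -> consistent Z (tau e s k).
Proof.
  intros hs hc. unfold tau. apply consistent_app. apply consistent_rho; auto.
  intros j hj hz. unfold rho in hz. rewrite app_length, repeat_length in hz.
  apply nstr_bit; auto. apply hc; auto. pose proof (str_len (nstr (p1 (wit e s k)))). rewrite nstr_spec in H. lia.
Qed.

Definition prefix (s t : list bool) := exists r, t = s ++ r.

Lemma prefix_trans a b c : prefix a b -> prefix b c -> prefix a c.
Proof. intros [r1 ->] [r2 ->]. exists (r1 ++ r2). rewrite app_assoc. auto. Qed.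

Lemma next_spec Z e s : hyperimmune Z -> consistent Z s ->
  consistent Z (next Z e s) /\ prefix s (next Z e s) /\ length s < length (next Z e s).
Proof.
  intros HZ hs. destruct (kstar_spec Z e s (stop_exists Z e s HZ)) as [hst _].
  unfold next. destruct (excluded_middle_informative (yes e s (kstar Z e s))) as [hy|hy].
  - destruct hst as [h|[_ h]]; [tauto|]. split; [|split].
    + apply consistent_app. apply consistent_tau; auto. intros [|j] hj; simpl in *; auto. lia.
    + exists ((repeat true (kstar Z e s) ++ nstr (p1 (wit e s (kstar Z e s)))) ++ [true]).
      unfold tau, rho. rewrite !app_assoc. auto.
    + unfold tau, rho. rewrite !app_length. simpl. lia.
  - split; [|split].
    + apply consistent_app. apply consistent_rho; auto. intros [|j] hj; simpl in *; auto. lia.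
    + exists (repeat true (kstar Z e s) ++ [true]). unfold rho. rewrite !app_assoc. auto.
    + unfold rho. rewrite !app_length. simpl. lia.
Qed.

Lemma sig_spec Z e : hyperimmune Z -> consistent Z (sig Z e) /\ e <= length (sig Z e).
Proof.
  intros HZ. induction e; simpl.
  - split; [intros i hi; simpl in hi; lia|lia].
  - destruct IHe as [h1 h2]. destruct (next_spec Z e (sig Z e) HZ h1) as [? [? ?]]. split; auto. lia.
Qed.

Lemma sig_prefix Z a b : hyperimmune Z -> a <= b -> prefix (sig Z a) (sig Z b).
Proof.
  intros HZ h. induction h. exists []; rewrite app_nil_r; auto.
  eapply prefix_trans. apply IHh. simpl. apply next_spec; auto. apply sig_spec; auto.
Qed.

Lemma prefix_nth s t i : prefix s t -> i < length s -> nth i t false = nth i s false.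
Proof. intros [r ->] h. apply app_nth1; auto. Qed.

Lemma init_seg_sig Z s e : hyperimmune Z -> prefix s (sig Z e) -> init_seg (Gset Z) s.
Proof.
  intros HZ hp i hi. unfold Gset.
  set (m := max e (S i)).
  assert (h1 : prefix s (sig Z m)). { eapply prefix_trans. apply hp. apply sig_prefix; auto. lia. }
  assert (h2 : prefix (sig Z (S i)) (sig Z m)). { apply sig_prefix; auto. lia. }
  assert (h3 : S i <= length (sig Z (S i))) by apply sig_spec, HZ.
  assert (h4 : i < length (sig Z (S i))) by lia. rewrite <- (prefix_nth _ _ _ h1 hi). rewrite <- (prefix_nth _ _ _ h2 h4). tauto.
Qed.

Lemma Z_sub_G Z n : hyperimmune Z -> Z n -> Gset Z n.
Proof.
  intros HZ hz. unfold Gset. destruct (sig_spec Z (S n) HZ) as [h1 h2]. apply h1; auto.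
Qed.

Lemma generic Z : hyperimmune Z -> one_generic (Gset Z).
Proof.
  intros HZ SS [c hc].
  remember (code_num (Pc c)) as e eqn:He.
  remember (sig Z e) as s eqn:Hs. remember (kstar Z e s) as k eqn:Hk.
  assert (hpre : sig Z (S e) = next Z e s) by (rewrite Hs; reflexivity).
  destruct (excluded_middle_informative (yes e s k)) as [hy|hy].
  - left. exists (tau e s k). split.
    + apply (init_seg_sig Z _ (S e) HZ). rewrite hpre. unfold next. rewrite <- Hk.
      destruct (excluded_middle_informative (yes e s k)) as [_|nn]; [|contradiction]. exists [true]. reflexivity.
    + apply hc. destruct (wit_spec _ _ _ hy) as [E [hE hw]]. rewrite He in hE. apply code_num_inj in hE. subst E.
      apply req_wit in hw. auto.
  - right. exists (rho s k). split.
    + apply (init_seg_sig Z _ (S e) HZ). rewrite hpre. unfold next. rewrite <- Hk.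
      destruct (excluded_middle_informative (yes e s k)) as [yy|_]; [contradiction|]. exists [true]. reflexivity.
    + intros t ht [u ->]. apply hc in ht. apply hy. apply Kq. exists (Pc c). split.
      symmetry; exact He. apply req_yes. exists u. exact ht.
Qed.

Definition QNC := cPair (ck 5) (cPair (cPair (ck 8) cPi1) (cComp CN cPi2)).
Lemma QNC_ev A e X : eval A QNC (cpair e X) (qnum e X).
Proof. eapply ev_eq. ev2. psimp. reflexivity. Qed.
Definition QCHK := quote CHK.
Lemma QCHK_ev A x : eval A QCHK x NCHK.
Proof. rewrite NCHK_eq. apply quote_ev. Qed.
Global Opaque QCHK NCHK.
Global Hint Resolve QCHK_ev : evdb.
Definition WNC := cPair (ck 5) (cPair QCHK (cPair (ck 6) (cPair (cComp QNC cPi1) (cComp CN cPi2)))).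
Lemma WNC_ev A e X j : eval A WNC (cpair (cpair e X) j) (wnum e X j).
Proof.
  eapply ev_eq. ev2. psimp. reflexivity.
Qed.
Global Opaque QNC WNC.

Definition YESC := cComp KQ QNC.
Lemma YESC_ev Z e X : eval (join Z jump0) YESC (cpair e X) (pb (jump0 (qnum e X))).
Proof. econstructor. apply QNC_ev. apply KQ_ev. Qed.

Definition WITC := cMin (cComp NSG (cComp KQ WNC)).
Lemma WITC_ev Z e X E p : code_num E = e -> eval empty_set (cMin E) X p ->
  eval (join Z jump0) WITC (cpair e X) p.
Proof.
  intros hE hp. constructor.
  - econstructor. econstructor. apply WNC_ev. apply KQ_ev. eapply ev_eq. apply NSG_ev.
    rewrite pb_1. auto. apply Kw. eauto.
  - intros k hk. exists 1. split; auto. econstructor. econstructor. apply WNC_ev. apply KQ_ev.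
    eapply ev_eq. apply NSG_ev. rewrite pb_0. auto. intro h. apply Kw in h.
    destruct h as [E' [hE' [p' [hp' hle]]]]. rewrite <- hE in hE'. apply code_num_inj in hE'. subst.
    apply (eval_det _ _ _ _ hp) in hp'. lia.
Qed.
Global Opaque YESC WITC.

Definition EX := cPair c11 (cComp RHO (cPair c21 cPi2)).
Lemma EX_ev A e s k : eval A EX (cpair (cpair e (rep s)) k) (cpair e (rep (rho s k))).
Proof.
  eapply ev_eq. apply e_pair. eapply e_comp; apply ev_pi1. eapply e_comp. eapply e_pair.
  eapply e_comp; [apply ev_pi1| apply ev_pi2]. apply ev_pi2. psimp. apply RHO_ev. psimp. reflexivity.
Qed.
Global Opaque EX.

Definition BR := cComp NSG (cComp CONS (cPair (cComp cPi2 c21) (cComp cPi1 (cComp WITC cPi1)))).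
Definition NOTSTOP := cComp (IFZ (ck 0) BR) (cPair EX (cComp YESC EX)).

Lemma NOTSTOP_no Z e s k : ~ yes e s k -> eval (join Z jump0) NOTSTOP (cpair (cpair e (rep s)) k) 0.
Proof.
  intros hy. apply e_comp with (y := cpair (cpair e (rep (rho s k))) 0).
  - eapply ev_eq. apply e_pair. apply EX_ev. eapply e_comp. apply EX_ev. apply YESC_ev.
    rewrite pb_0; auto.
  - apply IFZ_ev0. apply ck_ev.
Qed.

Lemma NOTSTOP_yes Z e s k : yes e s k ->
  eval (join Z jump0) NOTSTOP (cpair (cpair e (rep s)) k) (1 - pb (cons_ok Z s k (p1 (wit e s k)))).
Proof.
  intros hy. apply e_comp with (y := cpair (cpair e (rep (rho s k))) 1).
  - eapply ev_eq. apply e_pair. apply EX_ev. eapply e_comp. apply EX_ev. apply YESC_ev.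
    rewrite pb_1; auto.
  - apply IFZ_ev1 with (y := 0). apply ck_ev.
    destruct (wit_spec _ _ _ hy) as [E [hE hw]].
    econstructor. econstructor. eapply e_pair. ev2. eapply e_comp. eapply e_comp. apply ev_pi1. psimp.
    eapply WITC_ev. apply hE. apply hw. apply ev_pi1. psimp.
    eapply ev_eq. apply CONS_ev. unfold rep. psimp. reflexivity.
    eapply ev_eq. apply NSG_ev. unfold cons_ok, rho. rewrite app_length, repeat_length. reflexivity.
Qed.
Global Opaque NOTSTOP.

Definition KSTARC := cMin NOTSTOP.
Lemma KSTARC_ev Z e s : hyperimmune Z -> eval (join Z jump0) KSTARC (cpair e (rep s)) (kstar Z e s).
Proof.
  intros HZ. destruct (kstar_spec Z e s (stop_exists Z e s HZ)) as [hs hl].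
  constructor.
  - destruct hs as [h|[h1 h2]]. apply NOTSTOP_no; auto.
    eapply ev_eq. apply NOTSTOP_yes; auto. rewrite pb_1; auto.
  - intros k hk. specialize (hl k hk). exists 1. split; auto.
    destruct (classic (yes e s k)) as [h|h].
    + eapply ev_eq. apply NOTSTOP_yes; auto. rewrite pb_0; auto. intro hc. apply hl. right; auto.
    + exfalso. apply hl. left; auto.
Qed.
Global Opaque KSTARC.

Definition VV := cPair cPi1 (cComp RHO (cPair cPi2 KSTARC)).
Definition NEXTC := cComp (IFZ (cComp APP1 cPi2) (cComp APP1 (cComp APP (cPair c21 (cComp cPi1 (cComp WITC cPi1))))))
   (cPair VV (cComp YESC VV)).

Lemma NEXTC_ev Z e s : hyperimmune Z -> eval (join Z jump0) NEXTC (cpair e (rep s)) (rep (next Z e s)).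
Proof.
  intros HZ. unfold next. set (k := kstar Z e s).
  assert (hv : eval (join Z jump0) VV (cpair e (rep s)) (cpair e (rep (rho s k)))).
  { eapply ev_eq. apply e_pair. apply ev_pi1. eapply e_comp. eapply e_pair. apply ev_pi2. apply KSTARC_ev; auto.
    psimp. apply RHO_ev. psimp. reflexivity. }
  destruct (excluded_middle_informative (yes e s k)) as [hy|hy].
  - apply e_comp with (y := cpair (cpair e (rep (rho s k))) 1).
    + eapply ev_eq. apply e_pair. apply hv. eapply e_comp. apply hv. apply YESC_ev. rewrite pb_1; auto.
    + apply IFZ_ev1 with (y := rep (rho s k ++ [true])). eapply e_comp. apply ev_pi2. psimp. apply APP1_ev.
      destruct (wit_spec _ _ _ hy) as [E [hE hw]].
      eapply ev_eq. econstructor. econstructor. eapply e_pair. ev2. eapply e_comp. eapply e_comp. apply ev_pi1. psimp.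
      eapply WITC_ev. apply hE. apply hw. apply ev_pi1. psimp. apply APP_ev. apply APP1_ev. reflexivity.
  - apply e_comp with (y := cpair (cpair e (rep (rho s k))) 0).
    + eapply ev_eq. apply e_pair. apply hv. eapply e_comp. apply hv. apply YESC_ev. rewrite pb_0; auto.
    + apply IFZ_ev0. eapply e_comp. apply ev_pi2. psimp. apply APP1_ev.
Qed.
Global Opaque NEXTC.

Definition LOOP := cComp (cRec (ck (rep [])) (cComp NEXTC (cPair c12 c22))) (cPair cID cSucc).
Lemma LOOP_ev Z n : hyperimmune Z -> eval (join Z jump0) LOOP n (rep (sig Z (S n))).
Proof.
  intros HZ. econstructor. ev2. generalize (S n). intro m. induction m.
  - constructor. apply ck_ev.
  - econstructor. apply IHm. econstructor. ev2. psimp. apply NEXTC_ev; auto.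
Qed.

Definition PROG := cComp BIT (cPair (cComp cPi1 LOOP) cID).
Lemma PROG_ev Z n : hyperimmune Z -> eval (join Z jump0) PROG n (if excluded_middle_informative (Gset Z n) then 1 else 0).
Proof.
  intros HZ. econstructor. eapply e_pair. eapply e_comp. apply LOOP_ev; auto. apply ev_pi1. apply cID_ev.
  eapply ev_eq. apply BIT_ev. unfold rep. psimp. rewrite BITF_str.
  destruct (sig_spec Z (S n) HZ) as [_ hl].
  destruct (nth_error (sig Z (S n)) n) eqn:E.
  - apply nth_error_nth with (d := false) in E. unfold Gset. rewrite E.
    destruct (excluded_middle_informative (b = true)); destruct b; auto; congruence.
  - apply nth_error_None in E. lia.
Qed.

Theorem proposition4p7 (Z : nat -> Prop) (HZ : hyperimmune Z) :
  exists G : nat -> Prop,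
    one_generic G /\ turing_le G (join Z jump0) /\ (forall n, Z n -> G n).
Proof.
  exists (Gset Z). split; [|split].
  - apply generic; auto.
  - exists PROG. intros n. split; intros h.
    + eapply ev_eq. apply PROG_ev; auto. destruct (excluded_middle_informative (Gset Z n)); tauto.
    + eapply ev_eq. apply PROG_ev; auto. destruct (excluded_middle_informative (Gset Z n)); tauto.
  - intros n hz. apply Z_sub_G; auto.
Qed.
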